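(* Let $f:\{0,1\}^n\to\{0,1\}$ be a boolean function that is not invariant under any nonzero translation, i.e.\ $S_f=\{0^n\}$. Then $Q_E^{na}(f)=n$.
   Context: Addition of bit strings is in $\mathbb Z_2^n$ (bitwise mod 2). $S_f:=\{z\in\{0,1\}^n: f(x)=f(x+z)\ \text{for all } x\}$. Nonadaptive exact quantum query model: let $\mathcal H_{\rm in}$ have orthonormal basis $|0\rangle,\dots,|n\rangle$ and let the oracle $O_x$ act by $|i\rangle\mapsto(-1)^{x_i}|i\rangle$ with convention $x_0=0$. A nonadaptive quantum algorithm making $k$ queries consists of an input-independent state $|\psi\rangle\in\mathcal H_{\rm in}^{\otimes k}\otimes\mathcal H_{\rm work}$ (with $\mathcal H_{\rm work}$ a finite-dimensional workspace), to which $O_x^{\otimes k}\otimes I$ is applied, followed by an input-independent two-outcome measurement with outcomes labelled $0,1$. It computes $f$ exactly if for every $x$ the outcome is $f(x)$ with probability $1$. $Q_E^{na}(f)$ is the minimum such $k$. *)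

(* Defs.v *)
From HB Require Import structures.
From mathcomp Require Import all_boot all_order all_algebra algC.
Set Implicit Arguments. Unset Strict Implicit. Unset Printing Implicit Defensive.
Import Order.TTheory GRing.Theory Num.Theory.
Local Open Scope ring_scope.

(* Bit strings in {0,1}^n, coordinates indexed 0..n-1 (paper: 1..n). *)
Definition bits (n : nat) := {ffun 'I_n -> bool}.

Definition xorb_bits n (x z : bits n) : bits n := [ffun i => x i (+) z i].

Definition Sf n (f : bits n -> bool) : {set bits n} :=
  [set z | [forall x, f x == f (xorb_bits x z)]].

(* The oracle register H_in has basis |0>,...,|n>; x_0 = 0 and
   x_i (i >= 1) is the i-th bit of x, i.e. x (i-1) in 0-indexing. *)
Definition xext n (x : bits n) (i : 'I_n.+1) : bool :=
  if unlift ord0 i is Some j then x j else false.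

(* Phase of O_x^{(tensor) k} on basis state |i_1 ... i_k>. *)
Definition oracle_phase n k (x : bits n) (q : {ffun 'I_k -> 'I_n.+1}) : algC :=
  \prod_(j < k) (if xext x (q j) then -1 else 1).

(* Basis of H_in^{(tensor) k} (tensor) H_work, with dim H_work = d. *)
Definition qindex (n k d : nat) := ({ffun 'I_k -> 'I_n.+1} * 'I_d)%type.

Definition apply_op (T : finType) (A : T -> T -> algC) (v : T -> algC) : T -> algC :=
  fun a => \sum_b A a b * v b.

Definition is_projector (T : finType) (A : T -> T -> algC) : Prop :=
  (forall a b, A a b = (A b a)^*) /\
  (forall a c, \sum_b A a b * A b c = A a c).

Definition unit_state (T : finType) (v : T -> algC) : Prop :=
  \sum_a `|v a| ^+ 2 = 1.

Definition query_state n k d (x : bits n) (psi : qindex n k d -> algC) :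
  qindex n k d -> algC :=
  fun a => oracle_phase x a.1 * psi a.

(* A nonadaptive k-query algorithm computing f exactly: a unit state psi,
   and a two-outcome (projective) measurement {I - P (outcome 0), P (outcome 1)};
   outcome f(x) occurs with probability 1, i.e. P psi_x = psi_x if f x = 1
   and P psi_x = 0 if f x = 0. *)
Definition na_exact_computes n (f : bits n -> bool) (k : nat) : Prop :=
  exists d : nat, exists psi : qindex n k d -> algC,
  exists P : qindex n k d -> qindex n k d -> algC,
    unit_state psi /\ is_projector P /\
    forall x : bits n, forall a : qindex n k d,
      apply_op P (query_state x psi) a =
        (if f x then query_state x psi a else 0).

Definition QEna_eq n (f : bits n -> bool) (q : nat) : Prop :=
  na_exact_computes f q /\ forall k, na_exact_computes f k -> (q <= k)%N.

(* Main.v *)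
Require Import Defs.
From mathcomp Require Import all_boot all_order all_algebra algC.
From mathcomp Require Import ring.
Set Implicit Arguments. Unset Strict Implicit. Unset Printing Implicit Defensive.
Import Order.TTheory GRing.Theory Num.Theory.
Local Open Scope ring_scope.

Definition sgn (b : bool) : algC := if b then -1 else 1.

Lemma sgn_xor a b : sgn (a (+) b) = sgn a * sgn b.
Proof. by case: a; case: b; rewrite /sgn /= ?mulr1 ?mul1r ?mulrNN ?mulr1. Qed.

Lemma sgn_conj a : (sgn a)^* = sgn a.
Proof. by case: a; rewrite /sgn ?rmorphN1 ?rmorph1. Qed.

Lemma sgn_sq a : sgn a * sgn a = 1.
Proof. by case: a; rewrite /sgn ?mulrNN mulr1. Qed.

Lemma xext_xor n (x z : bits n) i : xext (xorb_bits x z) i = xext x i (+) xext z i.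
Proof. by rewrite /xext; case: (unlift ord0 i) => // j; rewrite ffunE. Qed.

Lemma phaseE n k (x : bits n) (q : {ffun 'I_k -> 'I_n.+1}) :
  oracle_phase x q = \prod_(j < k) sgn (xext x (q j)).
Proof. by []. Qed.

Lemma phase_xor n k (x z : bits n) q :
  oracle_phase (xorb_bits x z) q = oracle_phase x q * @oracle_phase n k z q.
Proof. rewrite !phaseE -big_split /=; apply: eq_bigr => j _; rewrite xext_xor; exact: sgn_xor. Qed.

Lemma phase_conj n k (x : bits n) q : (@oracle_phase n k x q)^* = oracle_phase x q.
Proof. rewrite !phaseE rmorph_prod; apply: eq_bigr => j _; exact: sgn_conj. Qed.

Lemma phase_sq n k (x : bits n) q : @oracle_phase n k x q * oracle_phase x q = 1.
Proof. rewrite !phaseE -big_split /= big1 // => j _; exact: sgn_sq. Qed.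

Lemma phase0 n k q : @oracle_phase n k [ffun=> false] q = 1.
Proof.
rewrite phaseE big1 // => j _; rewrite /xext; case: (unlift ord0 (q j)) => // i.
by rewrite ffunE.
Qed.

Lemma proj_orth (T : finType) (P : T -> T -> algC) (u w : T -> algC) :
  is_projector P -> (forall a, apply_op P u a = u a) ->
  (forall a, apply_op P w a = 0) -> \sum_a (w a)^* * u a = 0.
Proof.
move=> [Ph _] Hu Hw.
transitivity (\sum_a (w a)^* * \sum_b P a b * u b).
  by apply: eq_bigr => a _; rewrite -Hu.
rewrite (eq_bigr (fun a => \sum_b (w a)^* * (P a b * u b))); last first.
  by move=> a _; rewrite mulr_sumr.
rewrite exchange_big /= big1 // => b _.
rewrite (eq_bigr (fun a => ((w a)^* * P a b) * u b)); last by move=> a _; rewrite mulrA.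
rewrite -mulr_suml.
have ->: \sum_a (w a)^* * P a b = (apply_op P w b)^*.
  rewrite /apply_op rmorph_sum; apply: eq_bigr => a _.
  by rewrite rmorphM Ph mulrC.
by rewrite Hw rmorph0 mul0r.
Qed.

Definition qall n : {ffun 'I_n -> 'I_n.+1} := [ffun j => lift ord0 j].
Definition hpar n (z : bits n) : algC := oracle_phase z (qall n).

Lemma missing_idx n k (q : {ffun 'I_k -> 'I_n.+1}) : (k < n)%N ->
  exists i0 : 'I_n, lift ord0 i0 \notin codom q.
Proof.
move=> kn.
case: (pickP (fun i : 'I_n => lift ord0 i \notin codom q)) => [i0 Hi0 | H].
  by exists i0.
exfalso.
have sub : [set lift ord0 i | i in 'I_n] \subset [set x in codom q].
  apply/subsetP => x /imsetP [i _ ->]; rewrite inE.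
  by move: (H i) => /= /negbFE.
move: (subset_leq_card sub); rewrite card_imset; last exact: lift_inj.
rewrite card_ord.
have : (#|[set x in codom q]| <= k)%N.
  rewrite cardsE; apply: leq_trans (card_size _) _; by rewrite size_codom card_ord.
move=> h1 h2; move: (leq_trans h2 h1); rewrite leqNgt kn //.
Qed.

Lemma xext_lift n (z : bits n) j : xext z (lift ord0 j) = z j.
Proof. by rewrite /xext liftK. Qed.

Lemma key_zero n k (q : {ffun 'I_k -> 'I_n.+1}) : (k < n)%N ->
  \sum_(z : bits n) hpar z * oracle_phase z q = 0.
Proof.
move=> kn; have [i0 Hi0] := missing_idx q kn.
pose e : bits n := [ffun i => i == i0].
have eK : involutive (fun z => xorb_bits z e).
  move=> z; apply/ffunP => i; rewrite !ffunE; by case: (z i); case: (i == i0).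
have pe : oracle_phase e q = 1.
  rewrite phaseE big1 // => j _; rewrite /xext.
  case E: (unlift ord0 (q j)) => [i|] //; rewrite ffunE.
  case: eqP => // Hi; subst i; exfalso.
  have : q j = lift ord0 i0.
    move: E; case: unliftP => [i' -> [->] // | _ //].
  by move=> Hq; move: Hi0; rewrite -Hq codom_f.
have he : hpar e = -1.
  rewrite /hpar phaseE (bigD1 i0) //= big1 => [|j Hj]; rewrite ffunE xext_lift ffunE.
    by rewrite eqxx /sgn mulr1.
  by rewrite (negbTE Hj).
set S := \sum_z _.
have HS : S = - S.
  rewrite {1}/S (reindex_inj (can_inj eK)) /=.
  rewrite /S -sumrN; apply: eq_bigr => z _.
  rewrite /hpar !phase_xor -/(hpar z) -/(hpar e) he pe.
  by rewrite mulr1 mulrN1 mulNr.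
have : S *+ 2 = 0 by rewrite mulr2n {1}HS addNr.
by move/eqP; rewrite mulrn_eq0 /= => /eqP.
Qed.

Lemma conjM (x y : algC) : (x * y)^* = x^* * y^*.
Proof. exact: rmorphM. Qed.

Lemma ip_eq n k d (psi : qindex n k d -> algC) (x y : bits n) :
  \sum_a (query_state y psi a)^* * query_state x psi a =
  \sum_a oracle_phase x a.1 * oracle_phase y a.1 * `|psi a| ^+ 2.
Proof.
apply: eq_bigr => a _; rewrite /query_state conjM phase_conj normCK.
rewrite mulrACA [psi a * _]mulrC [oracle_phase y _ * _]mulrC //.
Qed.

Lemma lower n (f : bits n -> bool) k :
  Sf f = [set [ffun=> false]] -> na_exact_computes f k -> (n <= k)%N.
Proof.
move=> HS [d [psi [P [Hu [HP Hx]]]]].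
rewrite leqNgt; apply/negP => kn.
pose g (z : bits n) := \sum_a oracle_phase z a.1 * `|psi a| ^+ 2.
have orth : forall x y, f x != f y ->
    \sum_a oracle_phase x a.1 * oracle_phase y a.1 * `|psi a| ^+ 2 = 0.
  move=> x y; case Efx: (f x); case Efy: (f y) => // _.
    rewrite -ip_eq; apply: (proj_orth HP) => a; rewrite Hx ?Efx ?Efy //.
  rewrite (eq_bigr (fun a => oracle_phase y a.1 * oracle_phase x a.1 * `|psi a| ^+ 2)).
    rewrite -ip_eq; apply: (proj_orth HP) => a; rewrite Hx ?Efx ?Efy //.
  by move=> a _; rewrite [oracle_phase x _ * _]mulrC.
have gz : forall z, z != [ffun=> false] -> g z = 0.
  move=> z Hz.
  have : z \notin Sf f by rewrite HS inE.
  rewrite inE negb_forall => /existsP [x Hxz].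
  rewrite -(orth _ _ Hxz); apply: eq_bigr => a _.
  by rewrite phase_xor mulrA phase_sq mul1r.
have g0 : g [ffun=> false] = 1.
  rewrite -Hu /unit_state; apply: eq_bigr => a _; by rewrite phase0 mul1r.
have E1 : \sum_z hpar z * g z = 1.
  rewrite (bigD1 [ffun=> false]) //= big1 => [|z Hz]; last by rewrite gz ?mulr0.
  by rewrite g0 /hpar phase0 mulr1 addr0.
have E0 : \sum_z hpar z * g z = 0.
  rewrite (eq_bigr (fun z => \sum_a hpar z * (oracle_phase z a.1 * `|psi a| ^+ 2)));
    last by move=> z _; rewrite mulr_sumr.
  rewrite exchange_big /= big1 // => a _.
  rewrite (eq_bigr (fun z => (hpar z * oracle_phase z a.1) * `|psi a| ^+ 2));
    last by move=> z _; rewrite mulrA.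
  by rewrite -mulr_suml key_zero // mul0r.
by move: (oner_eq0 algC); rewrite -E1 E0 eqxx.
Qed.

Lemma conjS (I : finType) (P : pred I) (F : I -> algC) :
  (\sum_(i | P i) F i)^* = \sum_(i | P i) (F i)^*.
Proof. exact: rmorph_sum. Qed.

Lemma sum_delta (I : finType) (A : pred I) (F : I -> algC) x :
  \sum_(y | A y) F y * (x == y)%:R = if A x then F x else 0.
Proof.
rewrite big_mkcond (bigD1 x) //= big1 => [|y Hy].
  by case: (A x); rewrite ?eqxx ?mulr1 addr0.
by rewrite eq_sym (negbTE Hy); case: (A y); rewrite ?mulr0.
Qed.

Lemma onb_proj (I T : finType) (e : I -> T -> algC) (A : pred I) :
  (forall x y, \sum_a (e y a)^* * e x a = (x == y)%:R) ->
  is_projector (fun a b => \sum_(x | A x) e x a * (e x b)^*) /\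
  forall x a, apply_op (fun a b => \sum_(x | A x) e x a * (e x b)^*) (e x) a
     = if A x then e x a else 0.
Proof.
move=> On; split; first split.
- move=> a b /=; rewrite conjS; apply: eq_bigr => x _.
  by rewrite conjM conjCK mulrC.
- move=> a c /=.
  transitivity (\sum_(x | A x) \sum_(y | A y)
      (e x a * (e y c)^*) * \sum_b ((e x b)^* * e y b)).
    rewrite (eq_bigr (fun b => \sum_(x | A x) \sum_(y | A y)
      (e x a * (e y c)^*) * ((e x b)^* * e y b))); last first.
      move=> b _; rewrite mulr_suml; apply: eq_bigr => x _.
      rewrite mulr_sumr; apply: eq_bigr => y _.
      by ring.
    rewrite exchange_big /=; apply: eq_bigr => x _.
    rewrite exchange_big /=; apply: eq_bigr => y _.
    by rewrite mulr_sumr.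
  apply: eq_bigr => x Ax.
  rewrite (eq_bigr (fun y => e x a * (e y c)^* * (y == x)%:R)); last first.
    by move=> y _; rewrite On.
  rewrite (eq_bigr (fun y => (e x a * (e y c)^*) * (x == y)%:R)); last first.
    by move=> y _; rewrite eq_sym.
  by rewrite (sum_delta A (fun y => e x a * (e y c)^*)) Ax.
- move=> x a; rewrite /apply_op.
  rewrite (eq_bigr (fun b => \sum_(y | A y) e y a * ((e y b)^* * e x b))); last first.
    by move=> b _; rewrite mulr_suml; apply: eq_bigr => y _; rewrite mulrA.
  rewrite exchange_big /=.
  rewrite (eq_bigr (fun y => e y a * (x == y)%:R)); last first.
    by move=> y _; rewrite -mulr_sumr On.
  exact: sum_delta.
Qed.

Definition cst n : algC := (sqrtC (2 ^+ n))^-1.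
Definition ind n (j : 'I_n) (i : 'I_n.+1) : algC :=
  if (i == ord0) || (i == lift ord0 j) then 1 else 0.
Definition psiU n (a : qindex n n 1) : algC := cst n * \prod_j ind j (a.1 j).

Lemma cst_ge0 n : 0 <= cst n.
Proof. by rewrite /cst invr_ge0 sqrtC_ge0 exprn_ge0 // ler0n. Qed.

Lemma cst_sq n : cst n ^+ 2 * 2 ^+ n = 1.
Proof.
rewrite /cst exprVn sqrtCK mulVf // expf_neq0 // pnatr_eq0 //.
Qed.

Lemma ind_ge0 n j i : 0 <= @ind n j i.
Proof. by rewrite /ind; case: ifP; rewrite ?ler01 ?lexx. Qed.

Lemma ind_sq n j i : @ind n j i ^+ 2 = ind j i.
Proof. by rewrite /ind; case: ifP; rewrite ?expr1n ?expr0n. Qed.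

Lemma psiU_norm n (a : qindex n n 1) : `|psiU a| ^+ 2 = cst n ^+ 2 * \prod_j ind j (a.1 j).
Proof.
rewrite ger0_norm; last by rewrite mulr_ge0 ?cst_ge0 // prodr_ge0 // => j _; exact: ind_ge0.
rewrite /psiU exprMn -prodrXl; congr (_ * _); apply: eq_bigr => j _; exact: ind_sq.
Qed.

Lemma xext0 n (x : bits n) : xext x ord0 = false.
Proof. by rewrite /xext unlift_none. Qed.

Lemma factor_sum n (x y : bits n) j :
  \sum_(i : 'I_n.+1) sgn (xext x i) * sgn (xext y i) * ind j i
  = 1 + sgn (x j) * sgn (y j).
Proof.
rewrite (bigD1 ord0) //= (bigD1 (lift ord0 j)) /=; last by [].
rewrite big1 => [|i /andP [Hi1 Hi2]].
  rewrite !xext0 !xext_lift /ind eqxx /= eqxx !mulr1 addr0.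
  reflexivity.
rewrite /ind (negbTE Hi1) (negbTE Hi2) /= mulr0; reflexivity.
Qed.

Lemma ortho n (x y : bits n) :
  \sum_a (query_state y (@psiU n) a)^* * query_state x (@psiU n) a = (x == y)%:R.
Proof.
rewrite ip_eq.
rewrite -(pair_bigA _ (fun q w => oracle_phase x q * oracle_phase y q * `|@psiU n (q, w)| ^+ 2)).
rewrite (eq_bigr (fun q : {ffun 'I_n -> 'I_n.+1} => cst n ^+ 2 *
   \prod_j (sgn (xext x (q j)) * sgn (xext y (q j)) * ind j (q j)))); last first.
  move=> q _; rewrite big_ord1 psiU_norm !phaseE -!big_split.
  by rewrite mulrCA -big_split.
rewrite -mulr_sumr -(bigA_distr_bigA (fun j i => sgn (xext x i) * sgn (xext y i) * ind j i)).
rewrite (eq_bigr (fun j => 1 + sgn (x j) * sgn (y j))); last by move=> j _; exact: factor_sum.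
case: eqP => [<- | Hne].
  rewrite (eq_bigr (fun _ => 2)); last by move=> j _; rewrite sgn_sq.
  by rewrite prodr_const card_ord cst_sq.
case: (pickP (fun j => x j != y j)) => [j Hj | H]; last first.
  by exfalso; apply: Hne; apply/ffunP => j; move: (H j) => /= /negbFE /eqP.
rewrite (bigD1 j) //=.
have -> : 1 + sgn (x j) * sgn (y j) = 0.
  by move: Hj; case: (x j); case: (y j); rewrite /sgn //= ?mulrNN ?mulr1 ?mul1r ?subrr.
by rewrite mul0r mulr0.
Qed.

Lemma upper n (f : bits n -> bool) : na_exact_computes f n.
Proof.
have [HP Happ] := onb_proj f (fun x y => ortho (n:=n) x y).
exists 1%N, (@psiU n), (fun a b => \sum_(x | f x) query_state x (@psiU n) a *
    (query_state x (@psiU n) b)^*).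
split; last by split.
rewrite /unit_state.
transitivity (\sum_a (query_state [ffun=> false] (@psiU n) a)^* *
   query_state [ffun=> false] (@psiU n) a); last by rewrite ortho eqxx.
apply: eq_bigr => a _; by rewrite /query_state phase0 mul1r normCK mulrC.
Qed.

Theorem corollary7p3 (n : nat) (f : bits n -> bool) :
  Sf f = [set [ffun=> false]] -> QEna_eq f n.
Proof. move=> HS; split; [exact: upper | move=> k; exact: lower]. Qed.
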